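(* Consider the translation and rotation invariant model described in the context, fix $\beta>0$, and let $\widehat{B}:(-\pi,\pi]^d\to(0,+\infty]$ be a continuous function such that (i) $\int_{(-\pi,\pi]^d}\widehat{B}(p)\,dp<\infty$ and (ii) $\widehat{D}^\Lambda_p\le\widehat{B}(p)$ for all $p\in\Lambda_*\setminus\{0\}$ and all boxes $\Lambda$. For a box $\Lambda$ and $\ell,\ell'\in\Lambda$ put $B^\Lambda_{\ell\ell'}=|\Lambda|^{-1}\sum_{p\in\Lambda_*\setminus\{0\}}\widehat{B}(p)\cos(p,\ell-\ell')$. Then for every box $\Lambda$ and all $\ell,\ell'\in\Lambda$, $$D^\Lambda_{\ell\ell'}\ge\big(D^\Lambda_{\ell\ell}-B^\Lambda_{\ell\ell}\big)+B^\Lambda_{\ell\ell'}.$$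
   Context: Model. $d,\nu\ge1$, $m>0$, $a>0$. Interaction: $J_{\ell\ell'}=\phi(|\ell_1-\ell'_1|,\dots,|\ell_d-\ell'_d|)$ with $\phi:\mathbb{N}_0^d\to[0,\infty)$, $\phi(0)=0$, $\sum_{\ell'}J_{\ell\ell'}<\infty$. Anharmonic potential $V:\mathbb{R}^\nu\to\mathbb{R}$, the same at all sites, continuous, with $V(Ux)=V(x)$ for all $U\in O(\nu)$ and $V(x)\ge A_V|x|^{2r}+B_V$ ($r>1$, $A_V>0$). $C_\beta$: continuous $\omega:[0,\beta]\to\mathbb{R}^\nu$ with $\omega(0)=\omega(\beta)$; $L^2_\beta=L^2([0,\beta]\to\mathbb{R}^\nu)$. $\chi$: centered Gaussian measure on $C_\beta$ with covariance $A^{-1}$, $A=(-m\frac{d^2}{d\tau^2}+a)\otimes\mathbf{I}$ with periodic boundary conditions; $\chi_\Lambda=\bigotimes_{\ell\in\Lambda}\chi$. Boxes: $\Lambda=\Lambda_L=(-L,L]^d\cap\mathbb{Z}^d$, regarded as a discrete torus of side $2L$; $J^\Lambda_{\ell\ell'}=\phi$ evaluated at the coordinatewise torus distances of $\ell,\ell'$. Periodic measure: $\nu^{\rm per}_\Lambda(d\omega_\Lambda)\propto\exp\big[\frac12\sum_{\ell,\ell'\in\Lambda}J^\Lambda_{\ell\ell'}(\omega_\ell,\omega_{\ell'})_{L^2_\beta}-\sum_{\ell\in\Lambda}\int_0^\beta V(\omega_\ell(\tau))d\tau\big]\chi_\Lambda(d\omega_\Lambda)$ (normalized to a probability). $D^\Lambda_{\ell\ell'}=\beta\int_0^\beta\langle(\omega_\ell(\tau),\omega_{\ell'}(\tau'))\rangle_{\nu^{\rm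 per}_\Lambda}d\tau'$ (independent of $\tau$). $\Lambda_*=\{p\in\mathbb{R}^d:p_j=-\pi+\frac{\pi}{L}s_j,\ s_j=1,\dots,2L\}$ and $\widehat{D}^\Lambda_p=\sum_{\ell'\in\Lambda}D^\Lambda_{\ell\ell'}e^{i(p,\ell'-\ell)}$ (independent of $\ell$). *)

(* Defs.v *)
From HB Require Import structures.
From mathcomp Require Import all_boot all_order all_algebra.
From mathcomp Require Import all_classical all_reals all_analysis.
Set Implicit Arguments. Unset Strict Implicit. Unset Printing Implicit Defensive.
Import Order.TTheory GRing.Theory Num.Theory numFieldNormedType.Exports.
Local Open Scope classical_set_scope.
Local Open Scope ring_scope.

Section Defs.
Variable R : realType.

(* Sites of the box Lambda_L = (-L,L]^d, a discrete torus of side 2L: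
   the site with index k : 'I_d -> 'I_(2L) has coordinates k_j - L + 1.
   Only coordinate differences are ever used below, so the shift is immaterial. *)
Definition site (d L : nat) := {ffun 'I_d -> 'I_(2 * L)%N}.

Definition tdist (L : nat) (a b : nat) : nat :=
  let del := if (a <= b)%N then (b - a)%N else (a - b)%N in minn del (2 * L - del)%N.

Definition JL (d L : nat) (phi : {ffun 'I_d -> nat} -> R) (l l' : site d L) : R :=
  phi [ffun j => tdist L (l j) (l' j)].

Definition dotv (nu : nat) (x y : 'rV[R]_nu) : R := \sum_(i < nu) x 0 i * y 0 i.

Definition int0b (beta : R) (f : R -> R) : R :=
  Rintegral (@lebesgue_measure R) `[0, beta] f.

Definition L2ip (nu : nat) (beta : R) (w w' : R -> 'rV[R]_nu) : R :=
  int0b beta (fun t => dotv (w t) (w' t)).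

Definition Ex (dO : measure_display) (O : measurableType dO) (P : probability O R)
  (F : O -> R) : R := fine (\int[P]_w (F w)%:E).

Definition C2per (beta : R) (h : R -> R) : Prop :=
  (forall t, h (t + beta) = h t) /\ (forall t, derivable h t 1) /\
  (forall t, derivable (derive1 h) t 1) /\ continuous (derive1 (derive1 h)).

Definition Aop (m a : R) (h : R -> R) : R -> R :=
  fun t => - m * derive1 (derive1 h) t + a * h t.

(* X (a process with paths indexed by the sites of Lambda_L) has law
   chi_Lambda = product of centered Gaussian measures on C_beta with covariance
   A^{-1}: its characteristic functional is E[exp(i <f,X>)] = exp(-1/2 <f, A^{-1} f>),
   stated for f = A h, h ranging over beta-periodic C^2 functions (A maps these onto
   the continuous periodic functions). *)
Definition is_chi_process (d nu L : nat) (beta m a : R)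
  (dO : measure_display) (O : measurableType dO) (P : probability O R)
  (X : O -> site d L -> R -> 'rV[R]_nu) : Prop :=
  (forall l t (i : 'I_nu), measurable_fun setT (fun w => X w l t 0 i)) /\
  (forall w l, {within `[0, beta], continuous (X w l)} /\ X w l 0 = X w l beta) /\
  (forall h : site d L -> 'I_nu -> R -> R,
     (forall l i, C2per beta (h l i)) ->
     let S := fun w => \sum_(l : site d L) \sum_(i < nu)
                 int0b beta (fun t => Aop m a (h l i) t * X w l t 0 i) in
     let q := \sum_(l : site d L) \sum_(i < nu)
                 int0b beta (fun t => Aop m a (h l i) t * h l i t) in
     Ex P (fun w => cos (S w)) = expR (- (q / 2)) /\ Ex P (fun w => sin (S w)) = 0).

(* the (unnormalized) periodic Gibbs density w.r.t. chi_Lambda *)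
Definition gibbsW (d nu L : nat) (beta : R) (phi : {ffun 'I_d -> nat} -> R)
  (V : 'rV[R]_nu -> R) (w : site d L -> R -> 'rV[R]_nu) : R :=
  expR (2^-1 * (\sum_(l : site d L) \sum_(l' : site d L) JL phi l l' * L2ip beta (w l) (w l'))
        - \sum_(l : site d L) int0b beta (fun t => V (w l t))).

Definition avg_per (d nu L : nat) (beta : R) (phi : {ffun 'I_d -> nat} -> R)
  (V : 'rV[R]_nu -> R) (dO : measure_display) (O : measurableType dO) (P : probability O R)
  (X : O -> site d L -> R -> 'rV[R]_nu) (F : O -> R) : R :=
  Ex P (fun w => F w * gibbsW beta phi V (X w)) / Ex P (fun w => gibbsW beta phi V (X w)).

(* D^Lambda_{l l'} (taken at tau = 0; it is independent of tau) *)
Definition DL (d nu L : nat) (beta : R) (phi : {ffun 'I_d -> nat} -> R)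
  (V : 'rV[R]_nu -> R) (dO : measure_display) (O : measurableType dO) (P : probability O R)
  (X : O -> site d L -> R -> 'rV[R]_nu) (l l' : site d L) : R :=
  beta * int0b beta (fun t' => avg_per beta phi V P X (fun w => dotv (X w l 0) (X w l' t'))).

(* momentum p in Lambda_*: p_j = -pi + (pi/L) s_j with s_j = k_j + 1 in {1..2L} *)
Definition pvec (d L : nat) (k : site d L) : 'rV[R]_d :=
  \row_j (- pi + pi / L%:R * (k j).+1%:R).

Definition pdot (d L : nat) (p : 'rV[R]_d) (l l' : site d L) : R :=
  \sum_(j < d) p 0 j * ((l' j)%:R - (l j)%:R).

(* real and imaginary parts of hat D^Lambda_p = sum_l' D_{l l'} e^{i(p, l'-l)} *)
Definition DhatRe (d L : nat) (D : site d L -> site d L -> R) (p : 'rV[R]_d) (l : site d L) : R :=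
  \sum_(l' : site d L) D l l' * cos (pdot p l l').
Definition DhatIm (d L : nat) (D : site d L -> site d L -> R) (p : 'rV[R]_d) (l : site d L) : R :=
  \sum_(l' : site d L) D l l' * sin (pdot p l l').

Definition BL (d L : nat) (Bh : 'rV[R]_d -> \bar R) (l l' : site d L) : \bar R :=
  (((2 * L)%:R ^+ d)^-1)%:E *
  (\sum_(k : site d L | pvec k != 0%R) (Bh (pvec k) * (cos (pdot (pvec k) l' l))%:E))%E.

(* iterated Lebesgue integral over (-pi,pi]^n (Tonelli: equals the integral over
   the cube for nonnegative Borel functions) *)
Fixpoint cube_int (n : nat) (g : (nat -> R) -> \bar R) : \bar R :=
  match n with
  | 0 => g (fun _ => 0)
  | n'.+1 => (\int[@lebesgue_measure R]_(x in [set` `]- pi, pi]%R])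
               cube_int n' (fun q => g (fun k => if k == n' then x else q k)))%E
  end.

Definition cube (d : nat) : set 'rV[R]_d := [set p | forall j, - pi < p 0 j <= pi].

End Defs.

(* Main.v *)
Require Import Defs.
From HB Require Import structures.
From mathcomp Require Import all_boot all_order all_algebra.
From mathcomp Require Import all_classical all_reals all_analysis.
From mathcomp Require Import complex ring lra zify.
Import Order.TTheory GRing.Theory Num.Theory numFieldNormedType.Exports.
Local Open Scope classical_set_scope.
Set Implicit Arguments. Unset Strict Implicit. Unset Printing Implicit Defensive.
Local Open Scope ring_scope.

Definition ex (R : realType) (x : R) : R[i] := (cos x +i* sin x)%C.

Lemma exD (R : realType) (x y : R) : ex (x + y) = ex x * ex y.
Proof. rewrite /ex cosD sinD. rewrite [RHS]/GRing.mul /=. congr Complex; ring. Qed.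

Lemma ex0 (R : realType) : ex (0 : R) = 1.
Proof. by rewrite /ex cos0 sin0. Qed.

Lemma ex_sum (R : realType) (I : finType) (F : I -> R) :
  ex (\sum_i F i) = \prod_i ex (F i).
Proof. exact: (big_morph _ (@exD R) (@ex0 R)). Qed.

Lemma sumC (R : realType) (I : finType) (f g : I -> R) :
  \sum_i ((f i +i* g i)%C : R[i]) = ((\sum_i f i) +i* (\sum_i g i))%C.
Proof.
elim/big_rec3: _ => [//|i x y z _ ->].
by [].
Qed.

Lemma sin_ne0 (R : realType) (L n : nat) : (0 < n)%N -> (n < 2 * L)%N ->
  sin (pi / L%:R * n%:R / 2 : R) != 0.
Proof.
move=> n0 nL; apply: lt0r_neq0; apply: sin_gt0_pi.
have L0 : (0 : R) < L%:R by rewrite ltr0n; lia.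
have n0' : (0 : R) < n%:R by rewrite ltr0n.
have nL' : (n%:R : R) < 2 * L%:R by rewrite -natrM ltr_nat.
have p0 := pi_gt0 R.
apply/andP; split.
  by rewrite !mulr_gt0 ?invr_gt0.
have -> : pi / L%:R * n%:R / 2 = pi * (n%:R / (2 * L%:R)) :> R.
  by field; rewrite gt_eqF.
rewrite -[ltRHS]mulr1 ltr_pM2l // ltr_pdivrMr ?mul1r //.
by rewrite mulr_gt0.
Qed.
Lemma tele_zero (R : realType) (n : nat) (al be : R) :
  sin (be / 2) != 0 -> (forall x, sin (x + be *+ n) = sin x) ->
  (forall x, cos (x + be *+ n) = cos x) ->
  \sum_(s < n) cos (al + be *+ s) = 0 /\ \sum_(s < n) sin (al + be *+ s) = 0.
Proof.
move=> hs ps pc; set h := be / 2.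
have bh : be = h + h by rewrite /h -splitr.
split.
- have e : \sum_(s < n) cos (al + be *+ s) * (2 * sin h) =
           \sum_(0 <= s < n) (sin (al + be *+ s.+1 - h) - sin (al + be *+ s - h)).
    rewrite big_mkord; apply: eq_bigr => s _.
    have -> : al + be *+ s.+1 - h = (al + be *+ s) + h by rewrite mulrS bh; ring.
    rewrite sinD sinB; ring.
  rewrite telescope_sumr // -mulr_suml in e.
  have : (\sum_(s < n) cos (al + be *+ s)) * (2 * sin h) = 0.
    by rewrite e mulr0n addr0 addrAC ps subrr.
  move/eqP; rewrite mulf_eq0 mulf_eq0 (negbTE hs) pnatr_eq0 /= orbF => /eqP //.
- have e : \sum_(s < n) sin (al + be *+ s) * (2 * sin h) =
           \sum_(0 <= s < n) (- cos (al + be *+ s.+1 - h) - (- cos (al + be *+ s - h))).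
    rewrite big_mkord; apply: eq_bigr => s _.
    have -> : al + be *+ s.+1 - h = (al + be *+ s) + h by rewrite mulrS bh; ring.
    rewrite cosD cosB; ring.
  rewrite telescope_sumr // -mulr_suml in e.
  have : (\sum_(s < n) sin (al + be *+ s)) * (2 * sin h) = 0.
    by rewrite e mulr0n addr0 addrAC pc subrr.
  move/eqP; rewrite mulf_eq0 mulf_eq0 (negbTE hs) pnatr_eq0 /= orbF => /eqP //.
Qed.

Definition th (R : realType) (L s : nat) : R := - pi + pi / L%:R * s.+1%:R.

Lemma periodic_ab (R : realType) (f : R -> R) (T : R) (a b : nat) :
  periodic f T -> forall x, f (x + (T *+ b - T *+ a)) = f x.
Proof.
move=> pf x; rewrite addrA addrAC (periodicn pf).
by rewrite -(periodicn pf a (x - T *+ a)) subrK.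
Qed.

Lemma sum1d (R : realType) (L : nat) (a b : 'I_(2 * L)) : (0 < L)%N ->
  \sum_(s < 2 * L) ex (th R L s * (b%:R - a%:R)) = (a == b)%:R * (2 * L)%:R.
Proof.
move=> L0.
have L0' : (L%:R : R) != 0 by rewrite pnatr_eq0 -lt0n.
case: eqVneq => [->|nab].
  under eq_bigr do rewrite subrr mulr0 ex0.
  by rewrite sumr_const card_ord mul1r.
set v : R := b%:R - a%:R; set be := pi / L%:R * v; set al := (-pi + pi / L%:R) * v.
have e : forall s : nat, th R L s * v = al + be *+ s.
  by move=> s; rewrite /th /al /be -mulr_natr -addn1 natrD; ring.
have eb : be *+ (2 * L) = pi *+ 2 *+ b - pi *+ 2 *+ a.
  rewrite -(mulr_natr (pi *+ 2) b) -(mulr_natr (pi *+ 2) a) -(mulr_natr pi 2).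
  by rewrite -(mulr_natr be) natrM /be /v; field.
have ps : forall x, sin (x + be *+ (2 * L)) = sin x.
  by move=> x; rewrite eb; apply: periodic_ab; exact: sinD2pi.
have pc : forall x, cos (x + be *+ (2 * L)) = cos x.
  by move=> x; rewrite eb; apply: periodic_ab; exact: cosD2pi.
have hs : sin (be / 2) != 0.
  have ha := ltn_ord a; have hb := ltn_ord b.
  case: (ltngtP a b) => h.
  - rewrite /be /v -natrB ?(ltnW h) //; apply: sin_ne0; lia.
  - have -> : be / 2 = - (pi / L%:R * (a - b)%:R / 2).
      by rewrite /be /v natrB ?(ltnW h) //; ring.
    rewrite sinN oppr_eq0; apply: sin_ne0; lia.
  - by move: nab; rewrite (val_inj h) eqxx.
under eq_bigr do rewrite e.
rewrite /ex sumC.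
have [-> ->] := tele_zero al hs ps pc.
by rewrite mul0r.
Qed.

Lemma ortho (R : realType) (d L : nat) (l1 l2 : site d L) : (0 < L)%N ->
  \sum_(k : site d L) ex (pdot (pvec R k) l1 l2) = (l1 == l2)%:R * ((2 * L) ^ d)%:R.
Proof.
move=> L0.
transitivity (\sum_(k : site d L) \prod_j ex (th R L (k j) * ((l2 j)%:R - (l1 j)%:R))).
  apply: eq_bigr => k _; rewrite /pdot ex_sum; apply: eq_bigr => j _.
  by rewrite /pvec mxE.
rewrite -(bigA_distr_bigA (fun j (s : 'I_(2*L)) => ex (th R L s * ((l2 j)%:R - (l1 j)%:R)))) /=.
under eq_bigr do rewrite sum1d //.
case: (eqVneq l1 l2) => [->|ne].
  under eq_bigr do rewrite eqxx mul1r.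
  by rewrite prodr_const card_ord natrX mul1r.
have [j hj] : exists j, l1 j != l2 j.
  apply/existsP; rewrite -negb_forall; apply: contra ne => /forallP h.
  by apply/eqP/ffunP => j; apply/eqP/h.
by rewrite (bigD1 j) //= (negbTE hj) !mul0r.
Qed.

Lemma orthoR (R : realType) (d L : nat) (l1 l2 : site d L) : (0 < L)%N ->
  \sum_(k : site d L) cos (pdot (pvec R k) l1 l2) = (l1 == l2)%:R * ((2 * L) ^ d)%:R /\
  \sum_(k : site d L) sin (pdot (pvec R k) l1 l2) = 0.
Proof.
move=> L0; have := @ortho R d L l1 l2 L0; rewrite /ex sumC.
have -> : ((l1 == l2)%:R * ((2 * L) ^ d)%:R : R[i]) =
          (((l1 == l2)%:R * ((2 * L) ^ d)%:R : R) +i* 0)%C.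
  by rewrite complexr0 rmorphM !rmorph_nat.
by case=> -> ->.
Qed.

Lemma pdot_sub (R : realType) (d L : nat) (p : 'rV[R]_d) (l l1 l2 : site d L) :
  pdot p l l2 - pdot p l l1 = pdot p l1 l2.
Proof. by rewrite /pdot -sumrB; apply: eq_bigr => j _; ring. Qed.

Lemma pdot_swap (R : realType) (d L : nat) (p : 'rV[R]_d) (l1 l2 : site d L) :
  pdot p l1 l2 = - pdot p l2 l1.
Proof. by rewrite /pdot -sumrN; apply: eq_bigr => j _; ring. Qed.

Lemma pdot_refl (R : realType) (d L : nat) (p : 'rV[R]_d) (l : site d L) :
  pdot p l l = 0.
Proof. by rewrite /pdot big1 // => j _; rewrite subrr mulr0. Qed.

Lemma pdot0 (R : realType) (d L : nat) (l1 l2 : site d L) :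
  pdot (0 : 'rV[R]_d) l1 l2 = 0.
Proof. by rewrite /pdot big1 // => j _; rewrite mxE mul0r. Qed.

Lemma invF (R : realType) (d L : nat) (f : site d L -> R) (l l' : site d L) : (0 < L)%N ->
  \sum_(k : site d L) (\sum_(m : site d L) f m * cos (pdot (pvec R k) l m)) * cos (pdot (pvec R k) l l')
  + \sum_(k : site d L) (\sum_(m : site d L) f m * sin (pdot (pvec R k) l m)) * sin (pdot (pvec R k) l l')
  = ((2 * L) ^ d)%:R * f l'.
Proof.
move=> L0; rewrite -big_split /=.
transitivity (\sum_(k : site d L) \sum_(m : site d L) f m * cos (pdot (pvec R k) l' m)).
  apply: eq_bigr => k _; rewrite !mulr_suml -big_split; apply: eq_bigr => m _ /=.
  rewrite -(pdot_sub _ l l' m) cosB; ring.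
rewrite exchange_big /=.
under eq_bigr do rewrite -mulr_sumr (proj1 (@orthoR R d L _ _ L0)).
rewrite (bigD1 l') //= eqxx big1 => [|m hm]; first by rewrite addr0 mul1r mulrC.
by rewrite eq_sym (negbTE hm) mul0r mulr0.
Qed.
Lemma fin_ineq (R : realFieldType) (x y s1 s2 t n : R) : 0 < n -> s1 - s2 = t ->
  n * (x - y) <= t -> x - n^-1 * s1 + n^-1 * s2 <= y.
Proof.
move=> n0 st key.
have : x - y <= n^-1 * t.
  rewrite -(ler_pM2l n0) mulrA mulfV ?mul1r //; exact: lt0r_neq0.
rewrite -st mulrBr; move: (n^-1 * s1) (n^-1 * s2) => a b; lra.
Qed.

Theorem lemma3p1 (R : realType) (d nu : nat) (m a beta : R)
  (phi : {ffun 'I_d -> nat} -> R) (V : 'rV[R]_nu -> R) (AV BV r : R)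
  (dO : measure_display) (O : measurableType dO) (P : probability O R)
  (X : forall L : nat, O -> site d L -> R -> 'rV[R]_nu)
  (Bh : 'rV[R]_d -> \bar R) :
  (0 < d)%N -> (0 < nu)%N -> 0 < m -> 0 < a -> 0 < beta ->
  (* interaction *)
  phi [ffun => 0%N] = 0 -> (forall n, 0 <= phi n) ->
  (\esum_(n in [set: {ffun 'I_d -> nat}]) (phi n)%:E < +oo)%E ->
  (* anharmonic potential *)
  continuous V ->
  (forall U : 'M[R]_nu, U *m U^T = 1%:M -> forall x, V (x *m U) = V x) ->
  1 < r -> 0 < AV -> (forall x, AV * powR (dotv x x) r + BV <= V x) ->
  (* for each box Lambda_L, X L is distributed according to chi_Lambda *)
  (forall L, (0 < L)%N -> is_chi_process beta m a P (X L)) ->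
  (* hat B *)
  (forall p, cube p -> (0 < Bh p)%E) ->
  {within (@cube R d), continuous Bh} ->
  (cube_int d (fun q => Bh (\row_j q j)) < +oo)%E ->
  (forall L, (0 < L)%N -> forall k : site d L, pvec R k != 0 ->
     forall l : site d L,
       ((DhatRe (DL beta phi V P (X L)) (pvec R k) l)%:E <= Bh (pvec R k))%E /\
       DhatIm (DL beta phi V P (X L)) (pvec R k) l = 0) ->
  forall L, (0 < L)%N -> forall l l' : site d L,
    (((DL beta phi V P (X L) l l)%:E - BL Bh l l) + BL Bh l l'
      <= (DL beta phi V P (X L) l l')%:E)%E.
Proof.
move=> d0 nu0 m0 a0 b0 phi0 phipos phisum Vc Vrot r1 AV0 Vlow chi Bpos Bcont Bint HD L L0 l l'.
set D := DL beta phi V P (X L).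
have hD : forall l1, ((2 * L) ^ d)%:R * D l l1 =
    \sum_(k : site d L) DhatRe D (pvec R k) l * cos (pdot (pvec R k) l l1).
  move=> l1; rewrite -(@invF R d L (D l) l l1 L0) [X in _ + X]big1 ?addr0 //.
  move=> k _; case: (eqVneq (pvec R k) 0) => [->|nz].
    by rewrite pdot0 sin0 mulr0.
  have h := (HD L L0 k nz l).2; rewrite /DhatIm -/D in h.
  by rewrite (_ : \sum_(m : site d L) D l m * sin (pdot (pvec R k) l m) = 0) ?mul0r.
have cubeP : forall k : site d L, cube (pvec R k).
  move=> k j; rewrite /pvec mxE.
  have L0' : (0 : R) < L%:R by rewrite ltr0n.
  have p0 := pi_gt0 R.
  have t0 : (0 : R) < pi / L%:R * (k j).+1%:R by rewrite !mulr_gt0 ?invr_gt0 ?ltr0n.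
  have t2 : pi / L%:R * (k j).+1%:R <= pi * 2 :> R.
    have -> : pi / L%:R * (k j).+1%:R = pi * ((k j).+1%:R / L%:R) :> R by rewrite -mulrA (mulrC L%:R^-1).
    rewrite ler_pM2l // ler_pdivrMr // -natrM ler_nat.
    have := ltn_ord (k j); lia.
  apply/andP; split; lra.
case: (boolP [forall k : site d L, (pvec R k != 0) ==> (Bh (pvec R k) \is a fin_num)]) => hfin;
  last first.
  move: hfin; rewrite negb_forall => /existsP [k0]; rewrite negb_imply => /andP [nz0 nf].
  have hinf : Bh (pvec R k0) = +oo%E.
    move: nf; rewrite fin_numE negb_and !negbK => /orP [/eqP h|/eqP //].
    by have := Bpos _ (cubeP k0); rewrite h.
  have -> : BL Bh l l = +oo%E.
    rewrite /BL; under eq_bigr do rewrite pdot_refl cos0 mule1.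
    rewrite (bigD1 k0) //= hinf addye; last first.
      rewrite -ltNye; apply: (@lt_le_trans _ _ 0%E) => //.
      by apply: sume_ge0 => k /andP [_ _]; apply/ltW/Bpos/cubeP.
    rewrite muleC gt0_mulye // lte_fin invr_gt0 exprn_gt0 // ltr0n; lia.
  by rewrite /= addeNy addNye leNye.
pose b (k : site d L) := fine (Bh (pvec R k)).
have hB : forall k, pvec R k != 0 -> Bh (pvec R k) = (b k)%:E.
  by move=> k nz; rewrite /b fineK //; move/forallP: hfin => /(_ k) /implyP; apply.
have hBL : forall l1, BL Bh l l1 = (((2 * L)%:R ^+ d)^-1 *
    \sum_(k : site d L | pvec R k != 0) b k * cos (pdot (pvec R k) l1 l))%:E.
  move=> l1; rewrite /BL; under eq_bigr => k hk do rewrite (hB k hk) -EFinM.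
  by rewrite sumEFin -EFinM.
set nR : R := ((2 * L) ^ d)%:R.
have nR0 : 0 < nR by rewrite /nR ltr0n expn_gt0; apply/orP; left; lia.
have key : nR * (D l l - D l l') <=
    \sum_(k : site d L | pvec R k != 0) b k * (1 - cos (pdot (pvec R k) l l')).
  rewrite mulrBr !hD -sumrB (bigID (fun k => pvec R k != 0)) /=.
  rewrite [X in _ + X]big1 ?addr0; last first.
    by move=> k /negbNE/eqP ->; rewrite !pdot0 subrr.
  apply: ler_sum => k nz.
  rewrite pdot_refl cos0 mulr1 -{1}(mulr1 (DhatRe _ _ _)) -mulrBr.
  apply: ler_wpM2r; first by rewrite subr_ge0 cos_le1.
  by have [h _] := HD L L0 k nz l; rewrite (hB k nz) lee_fin in h.
have S12 : \sum_(k : site d L | pvec R k != 0) b k * cos (pdot (pvec R k) l l)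
    - \sum_(k : site d L | pvec R k != 0) b k * cos (pdot (pvec R k) l' l)
    = \sum_(k : site d L | pvec R k != 0) b k * (1 - cos (pdot (pvec R k) l l')).
  rewrite -sumrB; apply: eq_bigr => k _.
  by rewrite pdot_refl cos0 (pdot_swap _ l' l) cosN; ring.
have hc : ((2 * L)%:R ^+ d)^-1 = nR^-1 :> R by rewrite /nR natrX.
rewrite !hBL -EFinB -EFinD lee_fin hc.
exact: fin_ineq nR0 S12 key.
Qed.
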